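(* Let $(h_n)_{n\ge1}$ be the Hermite functions, i.e. the $L^2(\mathbb{R})$-normalized eigenfunctions of $T=-\frac{d^2}{dx^2}+x^2$ with $Th_n=(2n-1)h_n$, $\|h_n\|_{L^2(\mathbb{R})}=1$. Let $\delta_1>0$. Then there is a constant $C_{\delta_1}$ depending only on $\delta_1$ such that for every $n\ge1$, $$\left(\int_{\mathbb{R}}\frac{h_n^2(x)}{(1+\ln(1+x^2))^{2\delta_1}}\,dx\right)^{1/2}\le\frac{C_{\delta_1}}{(1+\ln n)^{\delta_1}}.$$ *)

(* Defs.v *)
From Stdlib Require Import Reals.
From Coquelicot Require Import Coquelicot.
Open Scope R_scope.

Definition is_integral_R (f : R -> R) (l : R) : Prop :=
  is_RInt_gen f (Rbar_locally m_infty) (Rbar_locally p_infty) l.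

Definition hermite_eigen (f : R -> R) (lam : R) : Prop :=
  (forall x, ex_derive f x) /\
  (forall x, ex_derive (Derive f) x) /\
  (forall x, - Derive (Derive f) x + x ^ 2 * f x = lam * f x).

(* (h_n)_{n >= 1} is a family of Hermite functions: T h_n = (2n-1) h_n and
   ||h_n||_{L^2(R)} = 1 (this determines h_n up to sign). *)
Definition hermite_family (h : nat -> R -> R) : Prop :=
  forall n : nat, (1 <= n)%nat ->
    hermite_eigen (h n) (2 * INR n - 1) /\
    is_integral_R (fun x => h n x ^ 2) 1.

(* Main.v *)
Require Import Defs.
From Stdlib Require Import Reals Lra Psatz Classical Arith Lia.
From Coquelicot Require Import Coquelicot.
Open Scope R_scope.

Lemma ex_RInt_c (f : R -> R) a b : (forall x, continuous f x) -> ex_RInt f a b.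
Proof. intros Hc; apply (@ex_RInt_continuous R_CompleteNormedModule); intros; apply Hc. Qed.

Lemma RInt_mono_dom (f : R -> R) a' a b b' :
  (forall x, continuous f x) -> (forall x, 0 <= f x) ->
  a' <= a -> a <= b -> b <= b' -> RInt f a b <= RInt f a' b'.
Proof.
  intros Hc Hp H1 H2 H3.
  rewrite <- (RInt_Chasles f a' a b') by apply ex_RInt_c, Hc.
  rewrite <- (RInt_Chasles f a b b') by apply ex_RInt_c, Hc.
  assert (0 <= RInt f a' a) by (apply RInt_ge_0; auto; [apply ex_RInt_c, Hc]).
  assert (0 <= RInt f b b') by (apply RInt_ge_0; auto; [apply ex_RInt_c, Hc]).
  change plus with Rplus. lra.
Qed.

Lemma gen_le (g : R -> R) l : (forall x, continuous g x) -> (forall x, 0 <= g x) ->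
  is_integral_R g l -> forall a b, a <= b -> RInt g a b <= l.
Proof.
  intros Hc Hp Hg a b Hab.
  destruct (Rle_or_lt (RInt g a b) l) as [H|H]; auto. exfalso.
  assert (Heps : 0 < RInt g a b - l) by lra.
  specialize (Hg (ball l (mkposreal _ Heps)) (locally_ball l _)).
  destruct Hg as [Q R0 HQ HR HP].
  destruct HQ as [M1 HM1]. destruct HR as [M2 HM2].
  destruct (HP (Rmin a (M1 - 1)) (Rmax b (M2 + 1))) as [y [Hy Hb]].
  - apply HM1. pose proof (Rmin_r a (M1-1)); lra.
  - apply HM2. pose proof (Rmax_r b (M2+1)); lra.
  - simpl in Hy. apply (@is_RInt_unique R_CompleteNormedModule) in Hy.
    assert (RInt g a b <= y).
    { rewrite <- Hy. apply RInt_mono_dom; auto. apply Rmin_l. apply Rmax_l. }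
    unfold ball in Hb; simpl in Hb; unfold AbsRing_ball in Hb; simpl in Hb.
    unfold abs, minus, plus, opp in Hb; simpl in Hb.
    apply Rabs_lt_between in Hb. lra.
Qed.

Lemma gen_exists (f : R -> R) (M : R) : (forall x, continuous f x) -> (forall x, 0 <= f x) ->
  (forall b, 0 <= b -> RInt f (-b) b <= M) -> exists I, is_integral_R f I /\ I <= M.
Proof.
  intros Hc Hp HM.
  set (E := fun v => exists b, 0 <= b /\ v = RInt f (-b) b).
  destruct (completeness E) as [I [HI1 HI2]].
  - exists M. intros v [b [Hb ->]]. auto.
  - exists (RInt f (-0) 0). exists 0. split; auto; lra.
  - exists I. split; [|apply HI2; intros v [b [Hb ->]]; auto].
    intros P [eps Heps].
    destruct (classic (exists b, 0 <= b /\ I - eps < RInt f (-b) b)) as [[B [HB HB2]]|Hn].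
    2:{ exfalso. assert (I <= I - eps). apply HI2. intros v [b [Hb ->]].
        apply Rnot_lt_le. intro. apply Hn. exists b; auto.
        pose proof (cond_pos eps); lra. }
    apply Filter_prod with (Q := fun a => a < -B) (R := fun b => B < b).
    + exists (-B). auto.
    + exists B. auto.
    + intros x y Hx Hy. exists (RInt f x y). split.
      * apply (@RInt_correct R_CompleteNormedModule), ex_RInt_c, Hc.
      * apply Heps. unfold ball; simpl; unfold AbsRing_ball; simpl.
        unfold abs, minus, plus, opp; simpl. apply Rabs_lt_between. split.
        -- assert (RInt f (-B) B <= RInt f x y) by (apply RInt_mono_dom; auto; lra). lra.
        -- assert (RInt f x y <= RInt f (- Rmax (-x) y) (Rmax (-x) y)).
           { apply RInt_mono_dom; auto. pose proof (Rmax_l (-x) y); lra. lra. apply Rmax_r. }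
           assert (RInt f (- Rmax (-x) y) (Rmax (-x) y) <= I).
           { apply HI1. exists (Rmax (-x) y). split; auto. pose proof (Rmax_r (-x) y); lra. }
           pose proof (cond_pos eps); lra.
Qed.

Lemma RInt_val (f F : R -> R) a b :
  (forall x, is_derive F x (f x)) -> (forall x, continuous f x) -> RInt f a b = F b - F a.
Proof.
  intros HF Hc. apply (@is_RInt_unique R_CompleteNormedModule).
  apply (@is_RInt_derive R_CompleteNormedModule); intros; auto.
Qed.

Lemma RInt_scalR (f : R -> R) a b c : ex_RInt f a b ->
  RInt (fun t => c * f t) a b = c * RInt f a b.
Proof. intro H. exact (RInt_scal (V:=R_CompleteNormedModule) f a b c H). Qed.

Lemma RInt_plusR (f g : R -> R) a b : ex_RInt f a b -> ex_RInt g a b ->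
  RInt (fun t => f t + g t) a b = RInt f a b + RInt g a b.
Proof. intros H1 H2. exact (RInt_plus (V:=R_CompleteNormedModule) f g a b H1 H2). Qed.

Lemma RInt_constR a b c : RInt (fun _ => c) a b = (b - a) * c.
Proof. exact (RInt_const (V:=R_CompleteNormedModule) a b c). Qed.

Lemma dcont (f : R -> R) x : ex_derive f x -> continuous f x.
Proof. intro H. apply (@ex_derive_continuous R_AbsRing R_NormedModule). exact H. Qed.

Lemma core (h : R -> R) (lam s : R) : hermite_eigen h lam ->
  is_integral_R (fun x => h x ^ 2) 1 -> lam = s^2 -> 0 < s -> 8 <= s^2 ->
  forall x, x^2 <= s^2/2 -> h x ^ 2 <= 20 / s.
Proof.
  intros [Hd1 [Hd2 Hode]] Hint Hlam Hs Hs8.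
  set (h' := Derive h). set (h'' := Derive h').
  assert (Ch : forall x, continuous h x) by (intro; apply dcont; auto).
  assert (Ch' : forall x, continuous h' x) by (intro; apply dcont; auto).
  assert (C2 : forall x, continuous (fun t => h t ^ 2) x).
  { intro x. apply (continuous_comp h (fun y => y ^ 2)); auto.
    apply dcont; auto_derive; auto. }
  assert (Hn1 : forall a b, a <= b -> RInt (fun t => h t ^ 2) a b <= 1).
  { apply gen_le; auto. intro; nra. }
  set (E := fun t => h' t ^ 2 + (lam - t^2) * h t ^ 2).
  set (dE := fun t => - (2 * t * h t ^ 2)).
  assert (DE : forall x, is_derive E x (dE x)).
  { intro x. unfold E, dE. auto_derive; [repeat split; auto|].
    change (Derive (fun x0 => h' x0) x) with (h'' x).
    change (Derive (fun x0 => h x0) x) with (h' x).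
    pose proof (Hode x) as Ho. fold h' h'' in Ho. nra. }
  assert (CdE : forall x, continuous dE x).
  { intro x. unfold dE. apply dcont. auto_derive. auto. }
  assert (Emax : forall x, E x <= E 0).
  { intro x. pose proof (RInt_val dE E 0 x DE CdE) as HR.
    destruct (Rle_or_lt 0 x) as [Hx|Hx].
    - assert (0 <= RInt (fun t => 2 * t * h t ^2) 0 x).
      { apply RInt_ge_0; auto. apply ex_RInt_c. intro; apply dcont; auto_derive; auto.
        intros t Ht. assert (0 <= h t ^ 2) by apply pow2_ge_0. nra. }
      assert (RInt dE 0 x = - RInt (fun t => 2 * t * h t ^2) 0 x).
      { unfold dE. rewrite (RInt_opp (V:=R_CompleteNormedModule)). reflexivity.
        apply ex_RInt_c. intro; apply dcont; auto_derive; auto. }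
      lra.
    - assert (0 <= RInt dE x 0).
      { apply RInt_ge_0; [lra| apply ex_RInt_c; auto|].
        intros t Ht. unfold dE. assert (0 <= h t ^ 2) by apply pow2_ge_0. nra. }
      rewrite <- (opp_RInt_swap (V:=R_CompleteNormedModule)) in HR by (apply ex_RInt_c; auto).
      change opp with Ropp in HR. simpl in HR. lra. }
  assert (Elow : forall x, 0 <= x -> E 0 - E x <= 2 * x).
  { intros x Hx. pose proof (RInt_val dE E 0 x DE CdE) as HR.
    assert (Hex : ex_RInt (fun t => 2 * t * h t ^2) 0 x).
    { apply ex_RInt_c. intro; apply dcont; auto_derive; auto. }
    assert (RInt dE 0 x = - RInt (fun t => 2 * t * h t ^2) 0 x).
    { unfold dE. rewrite (RInt_opp (V:=R_CompleteNormedModule)). reflexivity. auto. }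
    assert (H1 : RInt (fun t => 2 * t * h t ^2) 0 x <= RInt (fun t => (2 * x) * (h t ^ 2)) 0 x).
    { apply RInt_le; [lra| exact Hex | apply ex_RInt_c; intro; apply dcont; auto_derive; auto | ].
      intros t Ht. assert (0 <= h t ^ 2) by apply pow2_ge_0. nra. }
    rewrite RInt_scalR in H1 by (apply ex_RInt_c; auto).
    pose proof (Hn1 0 x Hx). nra. }
  assert (CE : forall x, continuous E x).
  { intro x. apply dcont. exists (dE x). apply DE. }
  set (a := s / 2).
  assert (Ha : 0 <= a) by (unfold a; lra).
  assert (low : a * (E 0 - 2 * a) <= RInt E 0 a).
  { replace (a * (E 0 - 2 * a)) with ((a - 0) * (E 0 - 2 * a)) by ring.
    rewrite <- RInt_constR. apply RInt_le; auto.
    apply ex_RInt_c; intro; apply continuous_const. apply ex_RInt_c; auto.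
    intros t Ht. pose proof (Elow t ltac:(lra)). lra. }
  set (D := fun t => h t * h' t).
  set (dD := fun t => h' t ^ 2 + (t ^ 2 - lam) * h t ^ 2).
  assert (DD : forall x, is_derive D x (dD x)).
  { intro x. unfold D, dD. auto_derive; [repeat split; auto|].
    change (Derive (fun x0 => h' x0) x) with (h'' x).
    change (Derive (fun x0 => h x0) x) with (h' x).
    pose proof (Hode x) as Ho. fold h' h'' in Ho. nra. }
  assert (CdD : forall x, continuous dD x).
  { intro x. unfold dD. apply dcont. auto_derive. auto. }
  assert (Cq : forall x, continuous (fun t => 2 * ((lam - t^2) * h t ^ 2)) x).
  { intro x. apply dcont. auto_derive. auto. }
  assert (Hsplit : RInt E 0 a = RInt (fun t => 2 * ((lam - t^2) * h t ^ 2)) 0 a + RInt dD 0 a).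
  { rewrite <- RInt_plusR by (apply ex_RInt_c; auto).
    apply (RInt_ext (V:=R_CompleteNormedModule)). intros t _. unfold E, dD. simpl. ring. }
  assert (up1 : RInt (fun t => 2 * ((lam - t^2) * h t ^ 2)) 0 a <= 2 * lam).
  { assert (RInt (fun t => 2 * ((lam - t^2) * h t ^ 2)) 0 a <= RInt (fun t => (2 * lam) * h t ^ 2) 0 a).
    { apply RInt_le; [lra | apply ex_RInt_c; auto | apply ex_RInt_c; intro; apply dcont; auto_derive; auto | ].
      intros t Ht. assert (0 <= h t ^ 2) by apply pow2_ge_0. nra. }
    rewrite (RInt_scalR (fun t => h t ^ 2) 0 a (2*lam)) in H by (apply ex_RInt_c; auto).
    pose proof (Hn1 0 a Ha). assert (0 <= lam) by nra. nra. }
  assert (up2 : RInt dD 0 a = D a - D 0) by (apply RInt_val; auto).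
  assert (Dbound : forall x, x ^ 2 <= s ^ 2 / 4 -> s * D x <= E 0 /\ - (s * D x) <= E 0).
  { intros x Hx. pose proof (Emax x). unfold E, D in *.
    assert (0 <= h x ^ 2) by apply pow2_ge_0.
    assert (0 <= (h' x - s / 2 * h x) ^ 2) by apply pow2_ge_0.
    assert (0 <= (h' x + s / 2 * h x) ^ 2) by apply pow2_ge_0.
    split; nra. }
  assert (E0b : E 0 <= 10 * s).
  { destruct (Dbound 0) as [_ H0]. nra.
    destruct (Dbound a) as [H1 _]. unfold a; nra.
    assert (a * (E 0 - 2 * a) <= 2 * lam + (D a - D 0)) by lra.
    unfold a in *. rewrite Hlam in *.
    assert (0 <= E 0) by (unfold E; assert (0 <= h' 0 ^ 2) by apply pow2_ge_0; assert (0 <= h 0 ^ 2) by apply pow2_ge_0; nra).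
    nra. }
  intros x Hx. pose proof (Emax x) as H. 
  assert (H2 : E x <= 10 * s) by lra. unfold E in H2.
  assert (0 <= h' x ^ 2) by apply pow2_ge_0. assert (0 <= h x ^ 2) by apply pow2_ge_0.
  rewrite Hlam in H2.
  assert (H3 : s^2 / 2 * h x ^ 2 <= 10 * s) by nra.
  apply Rmult_le_reg_l with s; auto. field_simplify; [|lra]. nra.
Qed.

Lemma Rpower_pos' x y : 0 < Rpower x y.
Proof. unfold Rpower. apply exp_pos. Qed.

Lemma ln_ge0 x : 1 <= x -> 0 <= ln x.
Proof. intro. rewrite <- ln_1. apply ln_le; lra. Qed.

Lemma Rpower_ge1 b z : 1 <= b -> 0 <= z -> 1 <= Rpower b z.
Proof. intros. rewrite <- (Rpower_O b) by lra. apply Rle_Rpower; auto. Qed.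

Lemma quarter x : 1 <= x -> Rpower x (/4) = sqrt (sqrt x).
Proof.
  intro. replace (/4) with (/2 * /2) by field. rewrite <- Rpower_mult.
  rewrite (Rpower_sqrt x) by lra. rewrite Rpower_sqrt. auto. apply sqrt_lt_R0; lra.
Qed.

Lemma Pbound d x : 0 < d -> 1 <= x ->
  Rpower (1 + ln x) (2 * d) <= Rpower (1 + 8 * d) (2 * d) * Rpower x (/4).
Proof.
  intros Hd Hx. pose proof (ln_ge0 x Hx).
  assert (H1 : 1 + ln x <= (1 + 8 * d) * exp (ln x / (8 * d))).
  { pose proof (exp_ineq1_le (ln x / (8 * d))).
    assert (0 <= ln x / (8 * d)) by (apply Rmult_le_pos; [lra| left; apply Rinv_0_lt_compat; lra]).
    assert ((1 + 8 * d) * (1 + ln x / (8 * d)) = 1 + 8 * d + ln x / (8 * d) + ln x) by (field; lra).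
    nra. }
  eapply Rle_trans. apply Rle_Rpower_l. lra. split. lra. exact H1.
  rewrite <- Rpower_mult_distr by (lra || apply exp_pos).
  apply Rmult_le_compat_l. left; apply Rpower_pos'.
  unfold Rpower at 1. rewrite ln_exp. unfold Rpower. right. f_equal. field. lra.
Qed.

Lemma sqrt_le_self y : 1 <= y -> sqrt y <= y.
Proof. intro. pose proof (sqrt_sqrt y ltac:(lra)). assert (1 <= sqrt y).
  { rewrite <- sqrt_1. apply sqrt_le_1_alt; lra. } nra. Qed.

Lemma ChaslesR (f : R -> R) a b c : (forall x, continuous f x) ->
  RInt f a b + RInt f b c = RInt f a c.
Proof. intro Hc. exact (RInt_Chasles f a b c (ex_RInt_c _ _ _ Hc) (ex_RInt_c _ _ _ Hc)). Qed.

Theorem lemma1p4 (delta1 : R) (Hdelta1 : 0 < delta1) :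
  exists C : R,
    forall h : nat -> R -> R, hermite_family h ->
    forall n : nat, (1 <= n)%nat ->
      exists I : R,
        is_integral_R
          (fun x => h n x ^ 2 / Rpower (1 + ln (1 + x ^ 2)) (2 * delta1)) I /\
        sqrt I <= C / Rpower (1 + ln (INR n)) delta1.
Proof.
  set (A := Rpower (1 + 8 * delta1) (2 * delta1)).
  set (T := Rpower 2 (2 * delta1)).
  set (K := 44 * A + T).
  exists (sqrt K).
  intros h Hfam n Hn.
  destruct (Hfam n Hn) as [Heig Hint].
  set (hn := h n). fold hn in Heig, Hint.
  set (w := fun x => Rpower (1 + ln (1 + x ^ 2)) (2 * delta1)).
  set (f := fun x => hn x ^ 2 / w x).
  change (exists I, is_integral_R f I /\ sqrt I <= sqrt K / Rpower (1 + ln (INR n)) delta1).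
  assert (HnR : 1 <= INR n) by (replace 1 with (INR 1) by reflexivity; apply le_INR; lia).
  set (P := Rpower (1 + ln (INR n)) (2 * delta1)).
  assert (HA : 0 < A) by apply Rpower_pos'.
  assert (HT : 0 < T) by apply Rpower_pos'.
  assert (HP : 0 < P) by apply Rpower_pos'.
  assert (Hw1 : forall x, 1 <= w x).
  { intro x. apply Rpower_ge1; [|lra]. pose proof (ln_ge0 (1 + x^2)). 
    assert (0 <= x ^ 2) by apply pow2_ge_0. lra. }
  assert (Ch : forall x, ex_derive hn x) by (apply Heig).
  assert (Cf : forall x, continuous f x).
  { intro x. apply dcont. unfold f, w, Rpower. auto_derive. repeat split; auto.
    - nra.
    - pose proof (ln_ge0 (1 + x*(x*1)) ltac:(nra)). lra.
    - apply Rgt_not_eq, exp_pos. }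
  assert (Cg : forall x, continuous (fun t => hn t ^ 2) x).
  { intro x. apply dcont. auto_derive. auto. }
  assert (Hg0 : forall x, 0 <= hn x ^ 2) by (intro; apply pow2_ge_0).
  assert (Hf0 : forall x, 0 <= f x).
  { intro x. unfold f. apply Rmult_le_pos; auto. left. apply Rinv_0_lt_compat. pose proof (Hw1 x); lra. }
  assert (Hfg : forall x, f x <= hn x ^ 2).
  { intro x. unfold f. pose proof (Hw1 x). pose proof (Hg0 x).
    apply Rmult_le_reg_r with (w x). lra. unfold Rdiv. rewrite Rmult_assoc, Rinv_l by lra. nra. }
  assert (Hn1 : forall a b, a <= b -> RInt (fun t => hn t ^ 2) a b <= 1).
  { apply gen_le; auto. }
  assert (Pq : P <= A * Rpower (INR n) (/4)) by (apply Pbound; auto).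
  assert (final : forall I, I <= K / P -> sqrt I <= sqrt K / Rpower (1 + ln (INR n)) delta1).
  { intros I HI. eapply Rle_trans. apply sqrt_le_1_alt. exact HI.
    rewrite sqrt_div_alt by auto. right. f_equal.
    unfold P. replace (2 * delta1) with (delta1 + delta1) by ring. rewrite Rpower_plus.
    apply sqrt_square. left; apply Rpower_pos'. }
  destruct (le_lt_dec n 4) as [Hsmall|Hbig].
  - destruct (gen_exists f 1 Cf Hf0) as [I [HI1 HI2]].
    { intros b Hb. eapply Rle_trans; [|apply (Hn1 (-b) b); lra].
      apply RInt_le; [lra | apply ex_RInt_c; auto | apply ex_RInt_c; auto |].
      intros; apply Hfg. }
    exists I. split; auto. apply final.
    assert (INR n <= 4) by (replace 4 with (INR 4) by (simpl; ring); apply le_INR; lia).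
    rewrite quarter in Pq by auto.
    assert (sqrt (sqrt (INR n)) <= 4).
    { pose proof (sqrt_le_self (INR n) HnR). assert (1 <= sqrt (INR n)).
      { rewrite <- sqrt_1. apply sqrt_le_1_alt; lra. }
      pose proof (sqrt_le_self _ H1). lra. }
    apply Rmult_le_reg_r with P; auto. unfold Rdiv. rewrite Rmult_assoc, Rinv_l by lra.
    unfold K. nra.
  - assert (Hn5 : 5 <= INR n) by (replace 5 with (INR 5) by (simpl; ring); apply le_INR; lia).
    set (s := sqrt (2 * INR n - 1)).
    assert (Hs2 : s ^ 2 = 2 * INR n - 1) by (apply pow2_sqrt; lra).
    assert (Hs : 0 < s) by (apply sqrt_lt_R0; lra).
    assert (Hs3 : 3 <= s) by nra.
    set (R0 := sqrt s).
    assert (HR2 : R0 ^ 2 = s) by (apply pow2_sqrt; lra).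
    assert (HR : 0 < R0) by (apply sqrt_lt_R0; lra).
    pose proof (core hn (2 * INR n - 1) s Heig Hint (eq_sym Hs2) Hs ltac:(lra)) as Hcore.
    assert (Hloc : forall x, -R0 <= x <= R0 -> f x <= 20 / s).
    { intros x Hx. eapply Rle_trans. apply Hfg. apply Hcore. nra. }
    assert (Hmid : RInt f (-R0) R0 <= 40 / R0).
    { eapply Rle_trans. apply RInt_le with (g := fun _ => 20 / s);
        [lra | apply ex_RInt_c; auto | apply ex_RInt_c; intro; apply continuous_const |].
      intros; apply Hloc; lra.
      rewrite RInt_constR. right. rewrite <- HR2. field. lra. }
    set (wR := w R0).
    assert (HwR : 1 <= wR) by apply Hw1.
    assert (Hout : forall x, R0 <= Rabs x -> f x <= / wR * hn x ^ 2).
    { intros x Hx. assert (R0 ^ 2 <= x ^ 2) by (rewrite <- (pow2_abs x); nra).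
      assert (wR <= w x).
      { unfold wR, w. apply Rle_Rpower_l. lra. split.
        - pose proof (ln_ge0 (1 + R0 ^ 2) ltac:(nra)). lra.
        - apply Rplus_le_compat_l. apply ln_le; nra. }
      unfold f. unfold Rdiv. rewrite Rmult_comm. apply Rmult_le_compat_r. auto.
      apply Rinv_le_contravar; lra. }
    set (M := 40 / R0 + / wR).
    assert (HwRi : 0 < / wR) by (apply Rinv_0_lt_compat; lra).
    destruct (gen_exists f M Cf Hf0) as [I [HI1 HI2]].
    { intros b Hb. destruct (Rle_or_lt b R0) as [Hb1|Hb1].
      - assert (RInt f (-b) b <= RInt f (-R0) R0) by (apply RInt_mono_dom; auto; lra).
        unfold M; lra.
      - assert (E1 : RInt f (-b) (-R0) + RInt f (-R0) R0 + RInt f R0 b = RInt f (-b) b).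
        { rewrite (ChaslesR f (-b) (-R0) R0 Cf). apply ChaslesR; auto. }
        assert (E2 : RInt (fun t => hn t ^ 2) (-b) (-R0) + RInt (fun t => hn t ^ 2) (-R0) R0
                     + RInt (fun t => hn t ^ 2) R0 b = RInt (fun t => hn t ^ 2) (-b) b).
        { rewrite (ChaslesR (fun t => hn t ^ 2) (-b) (-R0) R0 Cg). apply ChaslesR; auto. }
        assert (G0 : 0 <= RInt (fun t => hn t ^ 2) (-R0) R0).
        { apply RInt_ge_0; [lra | apply ex_RInt_c; auto | auto]. }
        assert (G1 : RInt (fun t => hn t ^ 2) (-b) b <= 1) by (apply Hn1; lra).
        assert (F1 : RInt f (-b) (-R0) <= / wR * RInt (fun t => hn t ^ 2) (-b) (-R0)).
        { rewrite <- RInt_scalR by (apply ex_RInt_c; auto).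
          apply RInt_le; [lra | apply ex_RInt_c; auto | apply ex_RInt_c; intro; apply dcont; auto_derive; auto |].
          intros x Hx. apply Hout. rewrite Rabs_left by lra. lra. }
        assert (F2 : RInt f R0 b <= / wR * RInt (fun t => hn t ^ 2) R0 b).
        { rewrite <- RInt_scalR by (apply ex_RInt_c; auto).
          apply RInt_le; [lra | apply ex_RInt_c; auto | apply ex_RInt_c; intro; apply dcont; auto_derive; auto |].
          intros x Hx. apply Hout. rewrite Rabs_right by lra. lra. }
        unfold M. nra. }
    exists I. split; auto. apply final. eapply Rle_trans. exact HI2.
    assert (Q1 : P <= A * R0).
    { eapply Rle_trans. exact Pq. rewrite quarter by auto. apply Rmult_le_compat_l. lra.
      unfold R0, s. apply sqrt_le_1_alt, sqrt_le_1_alt. lra. }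
    assert (Q2 : P <= T * wR).
    { unfold T, wR, w, P. rewrite Rpower_mult_distr.
      2: lra. 2: pose proof (ln_ge0 (1 + R0 ^ 2) ltac:(nra)); lra.
      apply Rle_Rpower_l. lra. split. pose proof (ln_ge0 (INR n) HnR). lra.
      rewrite HR2. assert (ln (INR n) <= ln ((1 + s) * (1 + s))) by (apply ln_le; nra).
      rewrite ln_mult in H by lra. lra. }
    unfold M, K. apply Rmult_le_reg_r with (P * R0 * wR). 
    apply Rmult_lt_0_compat. apply Rmult_lt_0_compat; auto. lra.
    field_simplify; try lra. nra.
Qed.
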